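(* Let $K$ be a finite extension of $\mathbb Q_p$ with ring of integers $\mathcal O_K$ and residue field $\tilde K$, and let $f\in\mathcal O_K(x)$ be a rational map with good reduction. If $f$ has height zero, then every critical point of its reduction $\tilde f$ is the reduction of a critical point of $f$.
   Context: The height of $f$ is the largest integer $h\ge 0$ such that the reduction can be written $\tilde f(x)=\tilde Q(x^{p^h})$ for some rational function $\tilde Q$ over the residue field; $f$ has positive height if and only if the derivative of $\tilde f$ is identically zero. *)

(* Defs.v *)
From HB Require Import structures.
From mathcomp Require Import all_boot all_order all_algebra.
From mathcomp Require Import reals.
Set Implicit Arguments. Unset Strict Implicit. Unset Printing Implicit Defensive.
Import Order.TTheory GRing.Theory Num.Theory.
Local Open Scope ring_scope.

(* Setting.  K is the field, L an algebraic closure of K (embedding iota),   *)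
(* absv a (non-archimedean) absolute value on L, k the residue field of L    *)
(* (= an algebraic closure of the residue field of K) with reduction map     *)
(* red : O_L -> k.  The conditions [padic_setting] say that K, with the      *)
(* restricted absolute value, is a complete, discretely valued field of      *)
(* characteristic 0 with finite residue field of characteristic p, i.e. a   *)
(* finite extension of Q_p.                         *)

Record padic_setting (p : nat) (K : fieldType) (L : closedFieldType)
    (iota : {rmorphism K -> L}) (R : realType) (absv : L -> R)
    (k : fieldType) (red : L -> k) : Prop := PadicSetting {
  ps_prime : prime p;
  ps_char0 : [pchar K] =i pred0;
  ps_algebraic : forall x : L, exists q : {poly K}, q != 0 /\ root (map_poly iota q) x;
  ps_abs_ge0 : forall x, 0 <= absv x;
  ps_abs_eq0 : forall x, (absv x == 0) = (x == 0);
  ps_absM : forall x y, absv (x * y) = absv x * absv y;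
  ps_abs_ultra : forall x y, absv (x + y) <= Num.max (absv x) (absv y);
  (* residue characteristic p *)
  ps_abs_p : absv (p%:R) < 1;
  ps_discrete : exists pi : K, 0 < absv (iota pi) < 1 /\
      forall x : K, x != 0 -> exists n : int, absv (iota x) = absv (iota pi) ^ n;
  ps_complete : forall u : nat -> K,
      (forall e : R, 0 < e -> exists N : nat, forall m n : nat,
          (N <= m)%N -> (N <= n)%N -> absv (iota (u m - u n)) < e) ->
      exists l : K, forall e : R, 0 < e -> exists N : nat, forall n : nat,
          (N <= n)%N -> absv (iota (u n - l)) < e;
  ps_redD : forall x y, absv x <= 1 -> absv y <= 1 -> red (x + y) = red x + red y;
  ps_redM : forall x y, absv x <= 1 -> absv y <= 1 -> red (x * y) = red x * red y;
  ps_red1 : red 1 = 1;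
  ps_red_eq0 : forall x, absv x <= 1 -> (red x = 0 <-> absv x < 1);
  ps_red_surj : forall c : k, exists x, absv x <= 1 /\ red x = c;
  ps_res_finite : exists s : seq k, forall x : K, absv (iota x) <= 1 -> red (iota x) \in s
}.

Definition in_resK (K : fieldType) (L : closedFieldType) (iota : {rmorphism K -> L})
    (R : realType) (absv : L -> R) (k : fieldType) (red : L -> k) (c : k) : Prop :=
  exists x : K, absv (iota x) <= 1 /\ red (iota x) = c.

(* A rational map f = F/G (F, G coprime) ; its degree. *)
Definition rdeg (A : nzRingType) (F G : {poly A}) : nat := (maxn (size F) (size G)).-1.

(* Degree-d reversal: z^d F(1/z). *)
Definition hrev (A : nzRingType) (d : nat) (F : {poly A}) : {poly A} :=
  \poly_(i < d.+1) F`_(d - i).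

(* Critical points on P^1 (None = infinity) of the rational map F/G, where F, G
   are coprime: in local coordinates the derivative vanishes.  At a finite
   point a this is (F'G - FG')(a) = 0 (covering both f(a) finite, via f', and
   f(a) = infinity, via (1/f)'); at infinity one uses z |-> f(1/z) =
   hrev d F / hrev d G with d = deg f, at z = 0. *)
Definition is_crit (A : idomainType) (F G : {poly A}) (P : option A) : bool :=
  match P with
  | Some a => root (F^`() * G - F * G^`()) a
  | None => let d := rdeg F G in
            root ((hrev d F)^`() * hrev d G - hrev d F * (hrev d G)^`()) 0
  end.

Definition redP (L : fieldType) (R : realType) (absv : L -> R) (k : fieldType)
    (red : L -> k) (P : option L) : option k :=
  match P with
  | Some a => if absv a <= 1 then Some (red a) else None
  | None => None
  end.

(* F, G represent an element of O_K(x) in normalized form: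
   coprime, coefficients in O_K, some coefficient a unit. *)
Definition normalized_integral (K : fieldType) (L : closedFieldType)
    (iota : {rmorphism K -> L}) (R : realType) (absv : L -> R) (F G : {poly K}) : Prop :=
  [/\ coprimep F G,
      forall i, absv (iota F`_i) <= 1,
      forall i, absv (iota G`_i) <= 1
    & exists i, absv (iota F`_i) = 1 \/ absv (iota G`_i) = 1].

Definition redpoly (K : fieldType) (L : closedFieldType) (iota : {rmorphism K -> L})
    (k : fieldType) (red : L -> k) (F : {poly K}) : {poly k} :=
  map_poly (fun c => red (iota c)) F.

Definition redF (K : fieldType) (L : closedFieldType) (iota : {rmorphism K -> L})
    (k : fieldType) (red : L -> k) (F G : {poly K}) : {poly k} :=
  redpoly iota red F %/ gcdp (redpoly iota red F) (redpoly iota red G).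
Definition redG (K : fieldType) (L : closedFieldType) (iota : {rmorphism K -> L})
    (k : fieldType) (red : L -> k) (F G : {poly K}) : {poly k} :=
  redpoly iota red G %/ gcdp (redpoly iota red F) (redpoly iota red G).

Definition good_reduction (K : fieldType) (L : closedFieldType) (iota : {rmorphism K -> L})
    (k : fieldType) (red : L -> k) (F G : {poly K}) : Prop :=
  rdeg (redF iota red F G) (redG iota red F G) = rdeg F G.

Definition height_zero (p : nat) (K : fieldType) (L : closedFieldType)
    (iota : {rmorphism K -> L}) (R : realType) (absv : L -> R) (k : fieldType)
    (red : L -> k) (F G : {poly K}) : Prop :=
  forall h : nat, (0 < h)%N ->
    ~ exists Q1 Q2 : {poly k},
        [/\ forall i, in_resK iota absv red Q1`_i,
            forall i, in_resK iota absv red Q2`_i,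
            Q2 != 0
          & redF iota red F G * (Q2 \Po 'X^(p ^ h)) =
            redG iota red F G * (Q1 \Po 'X^(p ^ h))].

(* Main.v *)
Require Import Defs.
From HB Require Import structures.
From mathcomp Require Import all_boot all_order all_algebra.
From mathcomp Require Import reals.
From mathcomp Require Import ring lra zify.
Set Implicit Arguments. Unset Strict Implicit. Unset Printing Implicit Defensive.
Import Order.TTheory GRing.Theory Num.Theory.
Local Open Scope ring_scope.
Definition Wr (A : comNzRingType) (F G : {poly A}) := F^`() * G - F * G^`().

Section Generic.
Variable A : comNzRingType.
Implicit Types P Q F G : {poly A}.

Lemma hrev_coef n P j : (hrev n P)`_j = if (j < n.+1)%N then P`_(n - j) else 0.
Proof. by rewrite /hrev coef_poly. Qed.

Lemma hrevD n P Q : hrev n (P + Q) = hrev n P + hrev n Q.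
Proof.
apply/polyP => j; rewrite coefD !hrev_coef coefD.
by case: ifP => _; rewrite ?addr0.
Qed.
Lemma hrevZ n a P : hrev n (a *: P) = a *: hrev n P.
Proof.
apply/polyP => j; rewrite coefZ !hrev_coef coefZ.
by case: ifP => _; rewrite ?mulr0.
Qed.
Lemma hrevN n P : hrev n (- P) = - hrev n P.
Proof. by rewrite -scaleN1r hrevZ scaleN1r. Qed.
Lemma hrevB n P Q : hrev n (P - Q) = hrev n P - hrev n Q.
Proof. by rewrite hrevD hrevN. Qed.
Lemma hrev0 n : hrev n (0 : {poly A}) = 0.
Proof. by apply/polyP => j; rewrite hrev_coef !coef0; case: ifP. Qed.
Lemma hrev_sum n (I : Type) (r : seq I) (f : I -> {poly A}) :
  hrev n (\sum_(i <- r) f i) = \sum_(i <- r) hrev n (f i).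
Proof. exact: (big_morph _ (hrevD n) (hrev0 n)). Qed.

Lemma hrevXn n i : (i <= n)%N -> hrev n ('X^i : {poly A}) = 'X^(n - i).
Proof.
move=> le_in; apply/polyP => j; rewrite hrev_coef !coefXn.
case: ltnP => hj.
  by rewrite (_ : (n - j == i)%N = (j == n - i)%N) //; apply/idP/idP => /eqP h; apply/eqP; lia.
by rewrite (_ : (j == n - i)%N = false) //; apply/eqP; lia.
Qed.

Lemma hrev_expand n P : (size P <= n.+1)%N ->
  hrev n P = \sum_(i < n.+1) P`_i *: 'X^(n - i).
Proof.
move=> sP; rewrite -{1}(coefK P) poly_def.
rewrite (big_ord_widen n.+1 (fun i => P`_i *: 'X^i)) // big_mkcond /= hrev_sum.
apply: eq_bigr => i _; case: ifP => h; first by rewrite hrevZ hrevXn // -ltnS.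
by rewrite hrev0 nth_default ?scale0r // leqNgt h.
Qed.

Lemma poly_expand n P : (size P <= n.+1)%N ->
  P = \sum_(i < n.+1) P`_i *: 'X^i.
Proof.
move=> sP; rewrite -{1}(coefK P) poly_def.
rewrite (big_ord_widen n.+1 (fun i => P`_i *: 'X^i)) // big_mkcond /=.
apply: eq_bigr => i _; case: ifP => h //.
by rewrite nth_default ?scale0r // leqNgt h.
Qed.

Lemma hrevM n P Q : (size P <= n.+1)%N -> (size Q <= n.+1)%N ->
  hrev (n + n) (P * Q) = hrev n P * hrev n Q.
Proof.
move=> sP sQ; rewrite (hrev_expand sP) (hrev_expand sQ).
rewrite {1}(poly_expand sP) {1}(poly_expand sQ) big_distrl /= hrev_sum big_distrl /=.
apply: eq_bigr => i _; rewrite big_distrr hrev_sum big_distrr /=.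
apply: eq_bigr => j _; rewrite -scalerAl -scalerAr scalerA hrevZ -exprD hrevXn; last first.
  by have := ltn_ord i; have := ltn_ord j; lia.
rewrite -scalerAl -scalerAr scalerA -exprD; congr (_ *: 'X^_).
by have := ltn_ord i; have := ltn_ord j; lia.
Qed.

Lemma XhrevD n F : 'X * (hrev n F)^`() = hrev n F *+ n - hrev n ('X * F^`()).
Proof.
apply/polyP => j; rewrite coefXM coefB coefMn !hrev_coef coefXM coef_deriv hrev_coef.
case: (posnP j) => [-> /=|j0].
  rewrite subn0; case: (posnP n) => [->|n0]; first by rewrite !mulr0n subrr.
  by rewrite coef_deriv prednK // subrr.
rewrite prednK //.
case: (ltnP j n.+1) => hj; last first.
  by rewrite !mul0rn subr0.
case: (eqVneq (n - j)%N 0%N) => e.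
  have jn : j = n by move: e hj; clear; lia.
  by rewrite jn subr0.
rewrite coef_deriv prednK; last by lia.
rewrite -mulrnBr ?leq_subr // subKn //.
Qed.

Lemma size_XD F : (size ('X * F^`())%R <= size F)%N.
Proof.
case: (eqVneq F^`() 0) => [->|nz]; first by rewrite mulr0 size_poly0.
have F0 : F != 0 by apply: contraNneq nz => ->; rewrite deriv0.
by rewrite mulrC size_mulX // lt_size_deriv.
Qed.

Lemma XhrevW n F G : (size F <= n.+1)%N -> (size G <= n.+1)%N ->
  'X * Wr (hrev n F) (hrev n G) = - hrev (n + n) ('X * Wr F G).
Proof.
move=> sF sG.
have sF' := leq_trans (size_XD F) sF.
have sG' := leq_trans (size_XD G) sG.
have -> : 'X * Wr (hrev n F) (hrev n G) =
   ('X * (hrev n F)^`()) * hrev n G - hrev n F * ('X * (hrev n G)^`()).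
  by rewrite /Wr; ring.
rewrite !XhrevD.
have -> : 'X * Wr F G = ('X * F^`()) * G - F * ('X * G^`()) by rewrite /Wr; ring.
rewrite hrevB !hrevM //.
ring.
Qed.

Lemma hrev_eq0 n P : (size P <= n.+1)%N -> hrev n P = 0 -> P = 0.
Proof.
move=> sP h; apply/polyP => j; rewrite coef0.
case: (ltnP j n.+1) => hj; last by rewrite nth_default //; apply: leq_trans sP hj.
have := congr1 (fun q : {poly A} => q`_(n - j)) h; rewrite /= hrev_coef coef0.
by rewrite ifT ?subKn //; lia.
Qed.

End Generic.

Lemma hrev_horner (L : fieldType) n (P : {poly L}) (z : L) : z != 0 ->
  (size P <= n.+1)%N -> (hrev n P).[z] = z ^+ n * P.[z^-1].
Proof.
move=> z0 sP; rewrite hrev_expand // (horner_coef_wide _ sP) horner_sum mulr_sumr.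
apply: eq_bigr => i _; rewrite hornerZ hornerXn exprVn mulrCA; congr (_ * _).
have hi := ltn_ord i.
have e : z ^+ n = z ^+ (n - i) * z ^+ i by rewrite -exprD subnK // -ltnS.
rewrite e -mulrA mulfV ?mulr1 //.
by rewrite expf_neq0.
Qed.

Lemma decim_comp (F : fieldType) (p : nat) (P : {poly F}) : p \in [pchar F] ->
  P^`() = 0 -> P = (\poly_(i < size P) P`_(i * p)) \Po 'X^p.
Proof.
move=> chp dP; have pp := pcharf_prime chp; have p0 := prime_gt0 pp.
apply/polyP => j; rewrite coef_comp_poly_Xn //.
case: ifP => [/dvdnP [m ->] | nd].
  rewrite mulnK // coef_poly; case: ifP => // h.
  rewrite nth_default //; apply: leq_trans (leq_pmulr _ p0).
  by rewrite leqNgt h.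
have j0 : (0 < j)%N by case: j nd => // ; rewrite dvdn0.
have := congr1 (fun q : {poly F} => q`_(j.-1)) dP.
rewrite /= coef_deriv prednK // coef0 => /eqP.
rewrite -mulr_natr mulf_eq0 => /orP [/eqP //|].
by rewrite -(dvdn_pcharf chp) nd.
Qed.

Lemma WrZ (A : comNzRingType) (c : A) (P Q : {poly A}) :
  Wr (c *: P) (c *: Q) = (c * c) *: Wr P Q.
Proof. by rewrite /Wr !derivZ -!mul_polyC polyCM; ring. Qed.

Lemma size_mul2 (A : comNzRingType) n (U V : {poly A}) :
  (size U <= n.+1)%N -> (size V <= n.+1)%N -> (size (U * V)%R <= (n + n).+1)%N.
Proof.
move=> hU hV; apply: leq_trans (size_polyMleq _ _) _.
move: (size U) (size V) hU hV => a b; lia.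
Qed.

Lemma size_XWr (A : comNzRingType) n (P Q : {poly A}) :
  (size P <= n.+1)%N -> (size Q <= n.+1)%N -> (size ('X * Wr P Q)%R <= (n + n).+1)%N.
Proof.
move=> sP sQ.
have -> : 'X * Wr P Q = ('X * P^`()) * Q - P * ('X * Q^`()) by rewrite /Wr; ring.
apply: leq_trans (size_polyD _ _) _; rewrite size_polyN geq_max.
have sP' := leq_trans (size_XD P) sP.
have sQ' := leq_trans (size_XD Q) sQ.
by apply/andP; split; apply: size_mul2.
Qed.

Lemma Wr0_deriv (F : fieldType) (A B : {poly F}) : coprimep A B -> Wr A B = 0 -> A^`() = 0.
Proof.
move=> cAB hW.
have e : A^`() * B = A * B^`() by apply/eqP; rewrite -subr_eq0; apply/eqP.
have : A %| A^`() by rewrite -(Gauss_dvdpl _ cAB) e dvdp_mulr.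
case: (eqVneq A 0) => [-> _|A0]; first by rewrite deriv0.
case: (eqVneq A^`() 0) => // nz /(dvdp_leq nz).
by rewrite leqNgt lt_size_deriv.
Qed.

Section Val.
Variables (L : closedFieldType) (R : realType) (absv : L -> R) (k : fieldType) (red : L -> k).
Hypothesis abs_ge0 : forall x, 0 <= absv x.
Hypothesis abs_eq0 : forall x, (absv x == 0) = (x == 0).
Hypothesis absM : forall x y, absv (x * y) = absv x * absv y.
Hypothesis abs_ultra : forall x y, absv (x + y) <= Num.max (absv x) (absv y).
Hypothesis redD : forall x y, absv x <= 1 -> absv y <= 1 -> red (x + y) = red x + red y.
Hypothesis redM : forall x y, absv x <= 1 -> absv y <= 1 -> red (x * y) = red x * red y.
Hypothesis red1 : red 1 = 1.
Hypothesis red_eq0 : forall x, absv x <= 1 -> (red x = 0 <-> absv x < 1).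

Lemma absv0 : absv 0 = 0.
Proof. by apply/eqP; rewrite abs_eq0. Qed.

Lemma absv1 : absv 1 = 1.
Proof.
have h : absv 1 * absv 1 = absv 1 * 1 by rewrite -absM !mulr1.
have nz : absv 1 != 0 by rewrite abs_eq0 oner_eq0.
by move/(mulfI nz): h.
Qed.

Lemma absvN1 : absv (-1) = 1.
Proof.
have h : absv (-1) * absv (-1) = 1 by rewrite -absM mulrNN mulr1 absv1.
have := abs_ge0 (-1); nra.
Qed.

Lemma absvN x : absv (- x) = absv x.
Proof. by rewrite -mulN1r absM absvN1 mul1r. Qed.

Lemma absvV x : x != 0 -> absv (x^-1) = (absv x)^-1.
Proof.
move=> x0; have h : absv x * absv (x^-1) = 1 by rewrite -absM mulfV ?absv1.
have nz : absv x != 0 by rewrite abs_eq0.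
by apply: (mulfI nz); rewrite h mulfV.
Qed.

Definition intg x := absv x <= 1.

Lemma intg0 : intg 0. Proof. by rewrite /intg absv0 ler01. Qed.
Lemma intg1 : intg 1. Proof. by rewrite /intg absv1. Qed.
Lemma intgD x y : intg x -> intg y -> intg (x + y).
Proof.
rewrite /intg => hx hy; apply: le_trans (abs_ultra x y) _.
by rewrite ge_max hx hy.
Qed.
Lemma intgN x : intg x -> intg (- x). Proof. by rewrite /intg absvN. Qed.
Lemma intgB x y : intg x -> intg y -> intg (x - y).
Proof. by move=> hx hy; apply: intgD => //; apply: intgN. Qed.
Lemma intgM x y : intg x -> intg y -> intg (x * y).
Proof.
rewrite /intg absM => hx hy.
by rewrite -(mulr1 1) ler_pM // abs_ge0.
Qed.
Lemma intg_natr n : intg n%:R.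
Proof. elim: n => [|n IH]; [exact: intg0| by rewrite mulrS; apply: intgD => //; apply: intg1]. Qed.
Lemma intg_sum (I : Type) (r : seq I) (P : pred I) (f : I -> L) :
  (forall i, P i -> intg (f i)) -> intg (\sum_(i <- r | P i) f i).
Proof. by move=> h; apply: (big_ind intg) => //; [exact: intg0 | exact: intgD]. Qed.
Lemma intg_prod (I : Type) (r : seq I) (P : pred I) (f : I -> L) :
  (forall i, P i -> intg (f i)) -> intg (\prod_(i <- r | P i) f i).
Proof. by move=> h; apply: (big_ind intg) => //; [exact: intg1 | exact: intgM]. Qed.
Lemma intg_mulrn x n : intg x -> intg (x *+ n).
Proof. by move=> hx; rewrite -mulr_natr; apply: intgM => //; apply: intg_natr. Qed.

Lemma red0 : red 0 = 0.
Proof.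
have := redD intg0 intg0; rewrite addr0 => h.
by apply: (addrI (red 0)); rewrite addr0 -h.
Qed.
Lemma redN x : intg x -> red (- x) = - red x.
Proof.
move=> hx; have h := redD hx (intgN hx); rewrite subrr red0 in h.
by apply/eqP; rewrite -addr_eq0 addrC -h.
Qed.
Lemma redB x y : intg x -> intg y -> red (x - y) = red x - red y.
Proof. by move=> hx hy; rewrite (redD hx (intgN hy)) (redN hy). Qed.
Lemma red_natr n : red n%:R = n%:R.
Proof.
elim: n => [|n IH]; first by rewrite red0.
by rewrite !mulrS (redD intg1 (intg_natr n)) IH red1.
Qed.
Lemma red_mulrn x n : intg x -> red (x *+ n) = red x *+ n.
Proof. by move=> hx; rewrite -[x *+ n]mulr_natr -[red x *+ n]mulr_natr (redM hx (intg_natr n)) red_natr. Qed.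
Lemma red_sum (I : Type) (r : seq I) (P : pred I) (f : I -> L) :
  (forall i, P i -> intg (f i)) ->
  red (\sum_(i <- r | P i) f i) = \sum_(i <- r | P i) red (f i).
Proof.
move=> h.
suff : intg (\sum_(i <- r | P i) f i) /\
   red (\sum_(i <- r | P i) f i) = \sum_(i <- r | P i) red (f i) by case.
apply: (big_ind2 (fun x y => intg x /\ red x = y)).
- by split; [exact: intg0 | exact: red0].
- by move=> x1 x2 y1 y2 [h1 <-] [h2 <-]; split; [apply: intgD | apply: redD].
- by move=> i Pi; split => //; apply: h.
Qed.
Lemma red_prod (I : Type) (r : seq I) (P : pred I) (f : I -> L) :
  (forall i, P i -> intg (f i)) ->
  red (\prod_(i <- r | P i) f i) = \prod_(i <- r | P i) red (f i).
Proof.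
move=> h.
suff : intg (\prod_(i <- r | P i) f i) /\
   red (\prod_(i <- r | P i) f i) = \prod_(i <- r | P i) red (f i) by case.
apply: (big_ind2 (fun x y => intg x /\ red x = y)).
- by split; [exact: intg1 | exact: red1].
- by move=> x1 x2 y1 y2 [h1 <-] [h2 <-]; split; [apply: intgM | apply: redM].
- by move=> i Pi; split => //; apply: h.
Qed.
Lemma intg_exp x n : intg x -> intg (x ^+ n).
Proof. by move=> hx; elim: n => [|n IH]; [rewrite expr0; apply: intg1 | rewrite exprS; apply: intgM]. Qed.
Lemma red_exp x n : intg x -> red (x ^+ n) = red x ^+ n.
Proof.
move=> hx; elim: n => [|n IH]; first by rewrite !expr0 red1.
by rewrite !exprS (redM hx (intg_exp n hx)) IH.
Qed.

Lemma abs_strict x y : absv y < absv x -> absv (x + y) = absv x.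
Proof.
move=> hyx; apply/eqP; rewrite eq_le; apply/andP; split.
  apply: le_trans (abs_ultra x y) _.
  by rewrite ge_max lexx (ltW hyx).
have h := abs_ultra (x + y) (- y).
rewrite addrK absvN in h.
move: h; rewrite le_max => /orP [h|h] //.
by move: (lt_le_trans hyx h); rewrite ltxx.
Qed.

Lemma abs_prod1 (I : Type) (r : seq I) (P : pred I) (f : I -> L) :
  (forall i, P i -> absv (f i) = 1) -> absv (\prod_(i <- r | P i) f i) = 1.
Proof.
move=> h; apply: (big_ind (fun x => absv x = 1)) => //; first exact: absv1.
by move=> x y hx hy; rewrite absM hx hy mulr1.
Qed.


Definition intp (p : {poly L}) := forall i, intg p`_i.
Definition rp (p : {poly L}) : {poly k} := map_poly red p.

Lemma coef_rp p i : (rp p)`_i = red p`_i.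
Proof. by rewrite /rp coef_map_id0 // red0. Qed.

Lemma intpD p q : intp p -> intp q -> intp (p + q).
Proof. by move=> hp hq i; rewrite coefD; apply: intgD. Qed.
Lemma intpB p q : intp p -> intp q -> intp (p - q).
Proof. by move=> hp hq i; rewrite coefB; apply: intgB. Qed.
Lemma intpM p q : intp p -> intp q -> intp (p * q).
Proof. by move=> hp hq i; rewrite coefM; apply: intg_sum => j _; apply: intgM. Qed.
Lemma intp_deriv p : intp p -> intp p^`().
Proof. by move=> hp i; rewrite coef_deriv; apply: intg_mulrn. Qed.
Lemma intp_hrev n p : intp p -> intp (hrev n p).
Proof. by move=> hp i; rewrite hrev_coef; case: ifP => _ //; apply: intg0. Qed.
Lemma intpZ c p : intg c -> intp p -> intp (c *: p).
Proof. by move=> hc hp i; rewrite coefZ; apply: intgM. Qed.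
Lemma intp1 : intp 1.
Proof. by move=> i; rewrite coef1; case: (i == 0)%N; [apply: intg1 | apply: intg0]. Qed.
Lemma intp_prod (I : Type) (r : seq I) (P : pred I) (f : I -> {poly L}) :
  (forall i, P i -> intp (f i)) -> intp (\prod_(i <- r | P i) f i).
Proof. by move=> h; apply: (big_ind intp) => //; [exact: intp1 | exact: intpM]. Qed.
Lemma intpXsubC r : intg r -> intp ('X - r%:P).
Proof.
move=> hr i; rewrite coefB coefX coefC.
case: (i == 1)%N; case: (i == 0)%N; rewrite ?subr0 ?sub0r;
  by [apply: intg1 | apply: intg0 | apply: intgN | apply: intgB; [apply: intg1|]].
Qed.

Lemma rpB p q : intp p -> intp q -> rp (p - q) = rp p - rp q.
Proof. by move=> hp hq; apply/polyP => i; rewrite coefB !coef_rp coefB redB. Qed.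
Lemma rpM p q : intp p -> intp q -> rp (p * q) = rp p * rp q.
Proof.
move=> hp hq; apply/polyP => i; rewrite coef_rp !coefM red_sum.
  by apply: eq_bigr => j _; rewrite !coef_rp redM; [|exact: hp|exact: hq].
by move=> j _; apply: intgM.
Qed.
Lemma rp_deriv p : intp p -> rp p^`() = (rp p)^`().
Proof. by move=> hp; apply/polyP => i; rewrite coef_rp !coef_deriv red_mulrn // coef_rp. Qed.
Lemma rp_hrev n p : rp (hrev n p) = hrev n (rp p).
Proof. by apply/polyP => i; rewrite coef_rp !hrev_coef; case: ifP => _; rewrite ?coef_rp ?red0. Qed.
Lemma rp_Wr p q : intp p -> intp q -> rp (Wr p q) = Wr (rp p) (rp q).
Proof.
move=> hp hq; have hp' := intp_deriv hp; have hq' := intp_deriv hq.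
rewrite /Wr rpB; try by apply: intpM.
by rewrite !rpM // !rp_deriv.
Qed.
Lemma intp_Wr p q : intp p -> intp q -> intp (Wr p q).
Proof.
by move=> hp hq; apply: intpB; apply: intpM => //; apply: intp_deriv.
Qed.

Lemma rp_horner p x : intp p -> intg x -> red p.[x] = (rp p).[red x].
Proof.
move=> hp hx; rewrite (horner_coef_wide x (leqnn (size p))).
rewrite (@horner_coef_wide _ (size p)); last by rewrite /rp size_poly.
rewrite red_sum; last by move=> i _; apply: intgM; [exact: hp | exact (intg_exp i hx)].
by apply: eq_bigr => i _; rewrite redM ?red_exp ?coef_rp //; [exact: hp | exact (intg_exp i hx)].
Qed.

Hypothesis red_surj : forall c : k, exists x, absv x <= 1 /\ red x = c.

Lemma intg_horner p x : intp p -> intg x -> intg p.[x].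
Proof.
move=> hp hx; rewrite horner_coef; apply: intg_sum => i _.
by apply: intgM; [exact: hp | exact (intg_exp i hx)].
Qed.

Lemma rp0 : rp 0 = 0.
Proof. by rewrite /rp map_poly0. Qed.

Lemma root_lift V c : intp V -> rp V != 0 -> root (rp V) c ->
  exists a, intg a /\ red a = c /\ root V a.
Proof.
move=> iV hV rc.
have V0 : V != 0 by apply: contraNneq hV => ->; rewrite rp0.
case: (closed_field_poly_normal V) => rs HV.
case: (boolP (has (fun r => intg r && (red r == c)) rs)) => [/hasP [r rin /andP [ir /eqP rcc]] | hn].
  exists r; split => //; split => //.
  by rewrite HV rootZ ?lead_coef_eq0 // root_prod_XsubC.
exfalso; move/negP: hV; apply.
set T := filter intg rs; set S := filter (predC intg) rs.
have eprod : \prod_(z <- rs) ('X - z%:P) =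
    \prod_(z <- T) ('X - z%:P) * \prod_(z <- S) ('X - z%:P).
  by rewrite -big_cat; apply: perm_big; rewrite perm_sym perm_filterC.
have Snz : forall r, r \in S -> 1 < absv r.
  by move=> r; rewrite mem_filter /= /intg -ltNge => /andP [].
have Sr0 : forall r, r \in S -> r != 0.
  move=> r /Snz h; apply/eqP => e; move: h; rewrite e absv0; lra.
have fact : forall r, r \in S ->
    'X - r%:P = (- r)%:P * (1 - (r^-1)%:P * 'X).
  move=> r /Sr0 r0; rewrite mulrBr mulr1 mulrA -polyCM mulNr mulfV //.
  by rewrite !polyCN mulNr polyC1 mul1r opprK addrC.
set q := fun r : L => 1 - (r^-1)%:P * 'X.
have eS : \prod_(z <- S) ('X - z%:P) = (\prod_(z <- S) (- z))%:P * \prod_(z <- S) q z.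
  rewrite rmorph_prod -big_split /= big_seq [RHS]big_seq.
  by apply: eq_bigr => r rS; rewrite fact.
set u := lead_coef V * \prod_(z <- S) (- z).
set P := \prod_(z <- T) ('X - z%:P) * \prod_(z <- S) q z.
have HVu : V = u *: P.
  by rewrite HV eprod eS /u /P mul_polyC -scalerAr scalerA.
have iP : intp P.
  apply: intpM.
    rewrite big_seq; apply: intp_prod => r; rewrite mem_filter => /andP [ir _].
    exact: intpXsubC.
  rewrite big_seq; apply: intp_prod => r rS.
  apply: intpB; first exact: intp1.
  rewrite mul_polyC; apply: intpZ.
    rewrite /intg absvV ?Sr0 // invf_le1; last by have := Snz r rS; lra.
    by have := Snz r rS; lra.
  move=> i; rewrite coefX; case: (i == 1)%N; [exact: intg1 | exact: intg0].
have [b [ib rb]] := red_surj c.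
have aPb : absv P.[b] = 1.
  rewrite /P hornerM !horner_prod absM.
  have -> : absv (\prod_(i <- T) ('X - i%:P).[b]) = 1.
    rewrite big_seq; apply: abs_prod1 => r; rewrite mem_filter => /andP [ir rin].
    rewrite hornerXsubC.
    have ibr : intg (b - r) by apply: intgB.
    have nc : ~~ (red r == c) by move/hasPn: hn => /(_ r rin); rewrite ir.
    have : ~ absv (b - r) < 1.
      move/(red_eq0 ibr); rewrite redB // rb => /eqP; rewrite subr_eq0 eq_sym.
      by move/negP: nc.
    by move: ibr; rewrite /intg; lra.
  rewrite mul1r big_seq; apply: abs_prod1 => r rS.
  rewrite /q !hornerE.
  have h1 := Snz r rS.
  have hlt : absv (- (r^-1 * b)) < absv 1.
    rewrite absvN absM absvV ?Sr0 // absv1.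
    have h0 : 0 < (absv r)^-1 by rewrite invr_gt0; lra.
    have h2 : (absv r)^-1 < 1 by rewrite invf_lt1; lra.
    apply: le_lt_trans h2; rewrite -[X in _ <= X]mulr1; apply: ler_wpM2l; [lra | exact: ib].
  by rewrite abs_strict // absv1.
have iVb : intg V.[b] := intg_horner iV ib.
have : absv V.[b] < 1.
  by apply/(red_eq0 iVb); rewrite rp_horner // rb; apply/eqP.
rewrite HVu hornerZ absM aPb mulr1 => hu.
have hle : forall i, absv (u * P`_i) < 1.
  move=> i; rewrite absM; apply: le_lt_trans hu.
  rewrite -[X in _ <= X]mulr1; apply: ler_wpM2l; [exact: abs_ge0 | exact: iP].
apply/eqP/polyP => i; rewrite coef_rp coef0 coefZ.
by apply/red_eq0; [rewrite /intg ltW | ].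
Qed.
End Val.

Unset Implicit Arguments.

Theorem proposition3p6 (p : nat) (K : fieldType) (L : closedFieldType)
    (iota : {rmorphism K -> L}) (R : realType) (absv : L -> R)
    (k : fieldType) (red : L -> k) (F G : {poly K}) :
  padic_setting p iota absv red ->
  normalized_integral iota absv F G ->
  (0 < rdeg F G)%N ->
  good_reduction iota red F G ->
  height_zero p iota absv red F G ->
  forall P : option k,
    is_crit (redF iota red F G) (redG iota red F G) P ->
    exists Q : option L,
      is_crit (map_poly iota F) (map_poly iota G) Q /\ redP absv red Q = P.
Proof.
move=> ps [cop Fint Gint [i0 hi0]] dpos good hz P crit.
case: ps => pr _ _ ge0 eq0 aM ultra absp _ _ rD rM r1 req0 rsurj _.
have RL := @root_lift _ _ _ _ _ ge0 eq0 aM ultra rD rM r1 req0 rsurj.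
have red0' : red 0 = 0 := red0 eq0 rD.
set F1 := map_poly iota F; set G1 := map_poly iota G.
set Ft := redpoly iota red F; set Gt := redpoly iota red G.
have iF1 : intp absv F1 by move=> i; rewrite /intg /F1 coef_map; exact: Fint.
have iG1 : intp absv G1 by move=> i; rewrite /intg /G1 coef_map; exact: Gint.
have eFt : rp red F1 = Ft.
  by apply/polyP => i; rewrite (coef_rp eq0 rD) /Ft /F1 /redpoly coef_map coef_map_id0 // rmorph0.
have eGt : rp red G1 = Gt.
  by apply/polyP => i; rewrite (coef_rp eq0 rD) /Gt /G1 /redpoly coef_map coef_map_id0 // rmorph0.
have cFt : forall i, Ft`_i = red (iota F`_i) by move=> i; rewrite coef_map_id0 // rmorph0.
have cGt : forall i, Gt`_i = red (iota G`_i) by move=> i; rewrite coef_map_id0 // rmorph0.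
have nz1 : forall x, absv x = 1 -> red x != 0.
  move=> x hx; apply/eqP => /(req0 x); rewrite hx lexx ltxx => h.
  by have := h isT.
have FGnz : (Ft != 0) || (Gt != 0).
  case: hi0 => h; apply/orP; [left|right]; apply/eqP => e.
    by move: (nz1 _ h); rewrite -cFt e coef0 eqxx.
  by move: (nz1 _ h); rewrite -cGt e coef0 eqxx.
set g := gcdp Ft Gt.
have g0 : g != 0 by rewrite gcdp_eq0 negb_and.
have sFt : (size Ft <= size F)%N by rewrite /Ft /redpoly size_poly.
have sGt : (size Gt <= size G)%N by rewrite /Gt /redpoly size_poly.
have sF1 : size F1 = size F by rewrite size_map_poly.
have sG1 : size G1 = size G by rewrite size_map_poly.
have good' : (maxn (size (Ft %/ g)) (size (Gt %/ g))).-1 = (maxn (size F) (size G)).-1 := good.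
have dpos' : (0 < (maxn (size F) (size G)).-1)%N := dpos.
rewrite !size_divp // in good'.
have sg0 : (0 < size g)%N by rewrite size_poly_gt0.
have sg : size g = 1%N.
  move: (size g) (size F) (size G) (size Ft) (size Gt) sg0 sFt sGt good' dpos'; clear; lia.
have [g1 g1nz eg] := size_poly1P _ (introT eqP sg).
have eF : Ft = g1 *: (Ft %/ g).
  by rewrite -mul_polyC mulrC -eg divpK // dvdp_gcdl.
have eG : Gt = g1 *: (Gt %/ g).
  by rewrite -mul_polyC mulrC -eg divpK // dvdp_gcdr.
have cop' : coprimep (Ft %/ g) (Gt %/ g) by apply: coprimep_div_gcd.
have chp : p \in [pchar k].
  rewrite inE pr /=; apply/eqP.
  rewrite -(red_natr eq0 aM ultra rD r1); apply/req0 => //.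
  exact: ltW.
set d := rdeg F G.
have sFd : (size Ft <= d.+1)%N.
  by rewrite /d /rdeg; move: (size Ft) (size F) (size G) sFt dpos'; clear; lia.
have sGd : (size Gt <= d.+1)%N.
  by rewrite /d /rdeg; move: (size Gt) (size F) (size G) sGt dpos'; clear; lia.
have sF1d : (size F1 <= d.+1)%N.
  by rewrite sF1 /d /rdeg; move: (size F) (size G) dpos'; clear; lia.
have sG1d : (size G1 <= d.+1)%N.
  by rewrite sG1 /d /rdeg; move: (size F) (size G) dpos'; clear; lia.
have WtNZ : Wr Ft Gt != 0.
  apply/negP => /eqP W0.
  have W0' : Wr (Ft %/ g) (Gt %/ g) = 0.
    move: W0; rewrite {1}eF {1}eG WrZ => /eqP; rewrite scaler_eq0 mulf_eq0 (negbTE g1nz) /=.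
    by move/eqP.
  have dF : Ft^`() = 0 by rewrite eF derivZ (Wr0_deriv cop' W0') scaler0.
  have dG : Gt^`() = 0.
    rewrite eG derivZ (@Wr0_deriv _ (Gt %/ g) (Ft %/ g)) ?scaler0 //.
      by rewrite coprimep_sym.
    have -> : Wr (Gt %/ g) (Ft %/ g) = - Wr (Ft %/ g) (Gt %/ g) by rewrite /Wr; ring.
    by rewrite W0' oppr0.
  apply: (hz 1%N isT).
  exists (\poly_(i < size Ft) Ft`_(i * p)), (\poly_(i < size Gt) Gt`_(i * p)).
  split.
  - move=> i; rewrite coef_poly; case: ifP => _.
      by exists F`_(i * p); split; [exact: Fint | rewrite cFt].
    by exists 0; rewrite rmorph0 (absv0 eq0) ler01 red0'.
  - move=> i; rewrite coef_poly; case: ifP => _.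
      by exists G`_(i * p); split; [exact: Gint | rewrite cGt].
    by exists 0; rewrite rmorph0 (absv0 eq0) ler01 red0'.
  - apply/eqP => Q0.
    have Gt0 : Gt = 0 by rewrite (decim_comp chp dG) Q0 comp_poly0.
    move: sg good'; rewrite /g Gt0 gcdp0 size_poly0 maxn0 => ->.
    move: dpos'; lia.
  - rewrite expn1 -(decim_comp chp dF) -(decim_comp chp dG).
    rewrite /redF /redG -/Ft -/Gt -/g {2}eF {1}eG -!scalerAr; congr (_ *: _).
    exact: mulrC.
have eW0 : rp red (Wr F1 G1) = Wr Ft Gt.
  by rewrite (rp_Wr ge0 eq0 aM ultra rD rM r1 iF1 iG1) eFt eGt.
case: P crit => [c|] crit.
  have rt : root (rp red (Wr F1 G1)) c.
    rewrite eW0 {1}eF {1}eG WrZ rootZ ?mulf_neq0 //; exact: crit.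
  have nzW : rp red (Wr F1 G1) != 0 by rewrite eW0.
  have [a [ia [ra rta]]] := RL _ c (intp_Wr ge0 eq0 aM ultra iF1 iG1) nzW rt.
  exists (Some a); split; first exact: rta.
  by rewrite /redP; move: ia; rewrite /intg => ->; rewrite ra.
have crit' : root (Wr (hrev d (Ft %/ g)) (hrev d (Gt %/ g))) 0.
  by move: crit; rewrite /is_crit good => crit; exact: crit.
set H1 := Wr (hrev d F1) (hrev d G1).
have iH : intp absv H1.
  by apply: (intp_Wr ge0 eq0 aM ultra); apply: (intp_hrev eq0).
have eH : rp red H1 = Wr (hrev d Ft) (hrev d Gt).
  rewrite /H1 (rp_Wr ge0 eq0 aM ultra rD rM r1); try by apply: (intp_hrev eq0).
  by rewrite !(rp_hrev eq0 rD) eFt eGt.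
have rt : root (rp red H1) 0.
  by rewrite eH {1}eF {1}eG !hrevZ WrZ rootZ ?mulf_neq0.
have nz : rp red H1 != 0.
  rewrite eH; apply/negP => /eqP H0.
  have := XhrevW sFd sGd; rewrite H0 mulr0 => /eqP; rewrite eq_sym oppr_eq0 => /eqP h.
  have := hrev_eq0 (size_XWr sFd sGd) h => /eqP; rewrite mulf_eq0 polyX_eq0 /=.
  by rewrite (negbTE WtNZ).
have [z [iz [rz rtz]]] := RL _ 0 iH nz rt.
have ed : rdeg F1 G1 = d by rewrite /rdeg sF1 sG1.
case: (eqVneq z 0) => [z0 | z0].
  exists None; split => //.
  by rewrite /is_crit ed -z0.
exists (Some z^-1); split.
  have e := XhrevW sF1d sG1d.
  have := congr1 (fun q => q.[z]) e.
  rewrite /= hornerM hornerX (rootP rtz) mulr0 hornerN.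
  rewrite (hrev_horner z0 (size_XWr sF1d sG1d)) hornerM hornerX.
  move=> /eqP; rewrite eq_sym oppr_eq0 !mulf_eq0 expf_eq0 invr_eq0 (negbTE z0) andbF /=.
  by [].
have az : absv z < 1 by apply/(req0 z iz).
have az0 : 0 < absv z by rewrite lt_def eq0 z0 ge0.
rewrite /redP (absvV eq0 aM z0) invf_le1 // ifF //.
by apply/negbTE; rewrite -ltNge.
Qed.
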